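(* There is a constant $C>0$ depending only on $\theta_*$ (and the fixed model $w$) such that for every $1$-Lipschitz function $\ell$ on $[0,\theta_*]$ with $\ell(0)=0$ and every integer $k\ge1$, there exist real coefficients $b_0,\dots,b_k$ such that $\hat\ell(\theta)=\sum_{x=0}^k b_x f(x\mid\theta)$ satisfies $$\max_{\theta\in[0,\theta_*]}|\ell(\theta)-\hat\ell(\theta)|\le C/k\quad\text{and}\quad \max_{0\le x\le k}|b_x|\le C^k\max_{1\le x\le k}\frac1{w(x)}.$$
   Context: Discrete exponential family model: fix $\theta_*>0$ and $w(x)>0$, $x=0,1,2,\dots$, such that $\sum_{x\ge0}w(x)\theta^x$ has radius of convergence $\theta_r\in(0,\infty]$ with $\theta_*<\theta_r$; $g(\theta)=\big(\sum_{x\ge 0}w(x)\theta^x\big)^{-1}$ and $f(x\mid\theta)=g(\theta)w(x)\theta^x$ for $x\in\{0,1,\dots\}$, $\theta\in[0,\theta_*]$. *)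

(* Defs.v *)
From Stdlib Require Import Reals List.
From Coquelicot Require Import Coquelicot.
Open Scope R_scope.

Definition Zfun (w : nat -> R) (theta : R) : R :=
  Series (fun x => w x * theta ^ x).

Definition gfun (w : nat -> R) (theta : R) : R := / Zfun w theta.

Definition fmass (w : nat -> R) (x : nat) (theta : R) : R :=
  gfun w theta * w x * theta ^ x.

Definition maxinv (w : nat -> R) (k : nat) : R :=
  fold_right Rmax 0 (map (fun x => / w x) (seq 1 k)).

(* Main.v *)
Require Import Defs.
From Stdlib Require Import Reals.
From Coquelicot Require Import Coquelicot.
From Stdlib Require Import Lra Lia Psatz List.
Open Scope R_scope.

Lemma sum_swap (F : nat -> nat -> R) (n M : nat) :
  sum_f_R0 (fun j => sum_f_R0 (fun m => F j m) n) M =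
  sum_f_R0 (fun m => sum_f_R0 (fun j => F j m) M) n.
Proof.
  induction M as [|M IH]; simpl.
  - apply sum_eq; intros; reflexivity.
  - rewrite IH, <- plus_sum. apply sum_eq; intros; reflexivity.
Qed.

Lemma sum_mul_r (f : nat -> R) (n : nat) (x : R) :
  sum_f_R0 f n * x = sum_f_R0 (fun i => f i * x) n.
Proof. rewrite Rmult_comm, scal_sum. reflexivity. Qed.

Lemma sum_mul_l (f : nat -> R) (n : nat) (x : R) :
  x * sum_f_R0 f n = sum_f_R0 (fun i => x * f i) n.
Proof. rewrite scal_sum. apply sum_eq; intros; ring. Qed.

Lemma prod_sums (x y : nat -> R) (n n' : nat) :
  sum_f_R0 x n * sum_f_R0 y n' =
  sum_f_R0 (fun m => sum_f_R0 (fun m' => x m * y m') n') n.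
Proof.
  rewrite sum_mul_r. apply sum_eq; intros. apply sum_mul_l.
Qed.

Lemma collapse (f : nat -> R) (p n : nat) (c : R) :
  sum_f_R0 (fun m => f m * (if Nat.eqb p m then c else 0)) n =
  if Nat.leb p n then f p * c else 0.
Proof.
  induction n as [|n IH]; simpl.
  - destruct p; simpl; ring.
  - rewrite IH. destruct (Nat.leb p n) eqn:E1.
    + apply Nat.leb_le in E1. destruct (Nat.eqb p (S n)) eqn:E2.
      * apply Nat.eqb_eq in E2; lia.
      * assert (Nat.leb p (S n) = true) by (apply Nat.leb_le; lia). rewrite H; ring.
    + apply Nat.leb_gt in E1. destruct (Nat.eqb p (S n)) eqn:E2.
      * apply Nat.eqb_eq in E2; subst. rewrite Nat.leb_refl; ring.
      * apply Nat.eqb_neq in E2. assert (Nat.leb p (S n) = false) by (apply Nat.leb_gt; lia).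
        rewrite H; ring.
Qed.

Lemma sum_nonneg (f : nat -> R) (n : nat) : (forall i, (i <= n)%nat -> 0 <= f i) -> 0 <= sum_f_R0 f n.
Proof.
  intros H. induction n as [|n IH]; simpl.
  - apply H; lia.
  - apply Rplus_le_le_0_compat; [apply IH; intros; apply H; lia | apply H; lia].
Qed.

Definition is_poly (d : nat) (B : R) (f : R -> R) : Prop :=
  exists c : nat -> R, (forall i, Rabs (c i) <= B) /\
    forall x, f x = sum_f_R0 (fun i => c i * x ^ i) d.

Lemma is_poly_ext d B f g : (forall x, f x = g x) -> is_poly d B f -> is_poly d B g.
Proof. intros E [c [H1 H2]]. exists c; split; auto. intros; rewrite <- E; auto. Qed.

Lemma sum_pad (c : nat -> R) (d m : nat) (x : R) :
  sum_f_R0 (fun i => (if Nat.leb i d then c i else 0) * x ^ i) (d + m) =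
  sum_f_R0 (fun i => c i * x ^ i) d.
Proof.
  induction m as [|m IH].
  - rewrite Nat.add_0_r. apply sum_eq; intros. rewrite (proj2 (Nat.leb_le i d)) by lia. ring.
  - rewrite Nat.add_succ_r. cbn [sum_f_R0]. rewrite IH.
    assert (Nat.leb (S (d + m)) d = false) by (apply Nat.leb_gt; lia). rewrite H; ring.
Qed.

Lemma is_poly_le d d' B B' f : (d <= d')%nat -> B <= B' -> is_poly d B f -> is_poly d' B' f.
Proof.
  intros Hd HB [c [H1 H2]].
  exists (fun i => if Nat.leb i d then c i else 0). split.
  - intros i. destruct (Nat.leb i d).
    + specialize (H1 i); lra.
    + rewrite Rabs_R0. specialize (H1 0%nat). pose proof (Rabs_pos (c 0%nat)). lra.
  - intros x. replace d' with (d + (d' - d))%nat by lia. rewrite sum_pad. auto.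
Qed.

Lemma is_poly_add d B1 B2 f g : is_poly d B1 f -> is_poly d B2 g ->
  is_poly d (B1 + B2) (fun x => f x + g x).
Proof.
  intros [c1 [H1 H2]] [c2 [H3 H4]]. exists (fun i => c1 i + c2 i). split.
  - intros i. eapply Rle_trans; [apply Rabs_triang|]. specialize (H1 i); specialize (H3 i); lra.
  - intros x. rewrite H2, H4, <- plus_sum. apply sum_eq; intros; ring.
Qed.

Lemma is_poly_scal d B a f : is_poly d B f -> is_poly d (Rabs a * B) (fun x => a * f x).
Proof.
  intros [c [H1 H2]]. exists (fun i => a * c i). split.
  - intros i. rewrite Rabs_mult. apply Rmult_le_compat_l; [apply Rabs_pos|auto].
  - intros x. rewrite H2, sum_mul_l. apply sum_eq; intros; ring.
Qed.

Lemma is_poly_mulx d B f : is_poly d B f -> is_poly (S d) B (fun x => x * f x).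
Proof.
  intros [c [H1 H2]]. exists (fun i => match i with O => 0 | S j => c j end). split.
  - intros [|i]; auto. rewrite Rabs_R0. specialize (H1 0%nat). pose proof (Rabs_pos (c 0%nat)). lra.
  - intros x. rewrite decomp_sum by lia. simpl. rewrite H2, sum_mul_l. ring_simplify.
    apply sum_eq; intros; simpl; ring.
Qed.

Lemma is_poly_const a : is_poly 0 (Rabs a) (fun _ => a).
Proof. exists (fun _ => a). split; [intros; lra| intros; simpl; ring]. Qed.

Lemma is_poly_sum d (B : nat -> R) (f : nat -> R -> R) (J : nat) :
  (forall j, (j <= J)%nat -> is_poly d (B j) (f j)) ->
  is_poly d (sum_f_R0 B J) (fun x => sum_f_R0 (fun j => f j x) J).
Proof.
  induction J as [|J IH]; intros H; simpl.
  - apply H; lia.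
  - apply is_poly_add; [apply IH; intros; apply H; lia| apply H; lia].
Qed.

Lemma cos_tele a b M : 2 * sin (b/2) * sum_f_R0 (fun j => cos (a + INR j * b)) M
  = sin (a + INR M * b + b/2) - sin (a - b/2).
Proof.
  induction M as [|M IH].
  - simpl. replace (a + 0 * b) with a by ring.
    replace (a + 0 * b + b/2) with (a + b/2) by ring.
    rewrite sin_plus, sin_minus. ring.
  - cbn [sum_f_R0]. rewrite Rmult_plus_distr_l, IH, S_INR.
    replace (a + (INR M + 1) * b + b / 2) with ((a + INR M * b + b) + b/2) by field.
    replace (a + INR M * b + b / 2) with ((a + INR M * b + b) - b/2) by field.
    replace (a + (INR M + 1) * b) with (a + INR M * b + b) by field.
    set (z := a + INR M * b + b). set (y := b/2).
    rewrite sin_plus, sin_minus. ring.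
Qed.

Lemma sum_cos_zero d N a s : (0 < d < N)%nat -> (s = 1 \/ s = -1) ->
  sum_f_R0 (fun j => cos (a + INR j * (s * 2 * PI * INR d / INR N))) (N - 1) = 0.
Proof.
  intros Hd Hs. set (b := s * 2 * PI * INR d / INR N).
  assert (HN : 0 < INR N) by (apply lt_0_INR; lia).
  assert (Hdr : 0 < INR d) by (apply lt_0_INR; lia).
  assert (HdN : INR d < INR N) by (apply lt_INR; lia).
  assert (Hsin : 0 < sin (PI * INR d / INR N)).
  { apply sin_gt_0.
    - apply Rdiv_lt_0_compat; [apply Rmult_lt_0_compat; [apply PI_RGT_0|]|]; lra.
    - apply (Rmult_lt_reg_r (INR N)); auto. field_simplify; try lra.
      apply Rmult_lt_compat_l; [apply PI_RGT_0| lra]. }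
  assert (Hb2 : sin (b/2) = s * sin (PI * INR d / INR N)).
  { unfold b. destruct Hs as [-> | ->].
    - rewrite (Rmult_1_l (sin _)). f_equal; field; lra.
    - replace (-1 * 2 * PI * INR d / INR N / 2) with (- (PI * INR d / INR N)) by (field; lra).
      rewrite sin_neg; ring. }
  assert (Hne : sin (b/2) <> 0) by (rewrite Hb2; destruct Hs as [-> | ->]; lra).
  apply (Rmult_eq_reg_l (2 * sin (b/2))); [|lra].
  rewrite cos_tele, Rmult_0_r. rewrite minus_INR by lia. simpl (INR 1).
  replace (a + (INR N - 1) * b + b / 2) with ((a - b/2) + s * (2 * INR d * PI)) by (unfold b; field; lra).
  destruct Hs as [-> | ->].
  - rewrite Rmult_1_l, sin_period. ring.
  - rewrite <- (sin_period (a - b/2 + -1 * (2 * INR d * PI)) d).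
    replace (a - b / 2 + -1 * (2 * INR d * PI) + 2 * INR d * PI) with (a - b/2) by ring. ring.
Qed.

Definition node (n j : nat) : R := 2 * PI * INR j / INR (S (S n)).

Lemma sum_cos_nodes n p q s t : (p <= S n)%nat -> (q <= S n)%nat -> (s = 1 \/ s = -1) ->
  sum_f_R0 (fun j => cos ((INR p - INR q) * (t + s * node n j))) (S n) =
  if Nat.eqb p q then INR (S (S n)) else 0.
Proof.
  intros Hp Hq Hs. destruct (Nat.eqb p q) eqn:E.
  - apply Nat.eqb_eq in E; subst. replace (INR (S (S n))) with (1 * INR (S (S n))) by ring. rewrite <- (sum_cte 1 (S n)).
    apply sum_eq; intros. replace ((INR q - INR q) * (t + s * node n i)) with 0 by ring.
    apply cos_0.
  - apply Nat.eqb_neq in E. replace (S n) with (S (S n) - 1)%nat at 2 by lia.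
    destruct (Nat.lt_ge_cases q p) as [Hlt|Hge].
    + rewrite <- (sum_cos_zero (p - q) (S (S n)) ((INR p - INR q) * t) s) by (auto; lia).
      apply sum_eq; intros. f_equal. rewrite minus_INR by lia. unfold node. field.
      apply not_0_INR; lia.
    + rewrite <- (sum_cos_zero (q - p) (S (S n)) ((INR q - INR p) * t) s) by (auto; lia).
      apply sum_eq; intros. rewrite <- cos_neg. f_equal. rewrite minus_INR by lia. unfold node. field.
      apply not_0_INR; lia.
Qed.

Definition av (n m : nat) : R := (INR m + 1) * (INR n + 1 - INR m).
Definition Kk (n : nat) (u : R) : R :=
  sum_f_R0 (fun m => sum_f_R0 (fun m' => av n m * av n m' * cos ((INR m - INR m') * u)) n) n.
Definition Sk (n : nat) : R := sum_f_R0 (fun m => av n m * av n m) n.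
Definition Tk (n : nat) : R := sum_f_R0 (fun m => av n m * av n (S m)) n.

Lemma Kk_nonneg n u : 0 <= Kk n u.
Proof.
  assert (E : Kk n u =
    sum_f_R0 (fun m => av n m * cos (INR m * u)) n * sum_f_R0 (fun m => av n m * cos (INR m * u)) n +
    sum_f_R0 (fun m => av n m * sin (INR m * u)) n * sum_f_R0 (fun m => av n m * sin (INR m * u)) n).
  { rewrite 2 prod_sums, <- plus_sum. unfold Kk. apply sum_eq; intros.
    rewrite <- plus_sum. apply sum_eq; intros.
    replace ((INR i - INR i0) * u) with (INR i * u - INR i0 * u) by ring.
    rewrite cos_minus. ring. }
  rewrite E. apply Rplus_le_le_0_compat; apply Rle_0_sqr.
Qed.

Lemma av_Sn n : av n (S n) = 0.
Proof. unfold av. rewrite S_INR. ring. Qed.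

Lemma dsum_diag n c : sum_f_R0 (fun m => sum_f_R0 (fun m' =>
   av n m * av n m' * (if Nat.eqb m m' then c else 0)) n) n = c * Sk n.
Proof.
  unfold Sk. rewrite sum_mul_l. apply sum_eq; intros.
  rewrite collapse. rewrite (proj2 (Nat.leb_le i n)) by lia. ring.
Qed.

Lemma dsum_up n c : sum_f_R0 (fun m => sum_f_R0 (fun m' =>
   av n m * av n m' * (if Nat.eqb (S m) m' then c else 0)) n) n = c * Tk n.
Proof.
  unfold Tk. rewrite sum_mul_l. apply sum_eq; intros.
  rewrite collapse. destruct (Nat.leb (S i) n) eqn:E; [ring|].
  apply Nat.leb_gt in E. replace (S i) with (S n) by lia. rewrite av_Sn. ring.
Qed.

Lemma dsum_down n c : sum_f_R0 (fun m => sum_f_R0 (fun m' =>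
   av n m * av n m' * (if Nat.eqb m (S m') then c else 0)) n) n = c * Tk n.
Proof.
  rewrite (sum_swap (fun m m' => av n m * av n m' * (if Nat.eqb m (S m') then c else 0))).
  unfold Tk. rewrite sum_mul_l. apply sum_eq; intros.
  transitivity (sum_f_R0 (fun m => (av n m * av n i) * (if Nat.eqb (S i) m then c else 0)) n).
  { apply sum_eq; intros. rewrite Nat.eqb_sym. reflexivity. }
  rewrite collapse. destruct (Nat.leb (S i) n) eqn:E; [ring|].
  apply Nat.leb_gt in E. replace (S i) with (S n) by lia. rewrite av_Sn. ring.
Qed.

Lemma Kk_avg n t s : (s = 1 \/ s = -1) ->
  sum_f_R0 (fun j => Kk n (t + s * node n j)) (S n) = INR (S (S n)) * Sk n.
Proof.
  intros Hs. unfold Kk.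
  rewrite (sum_swap (fun j m => sum_f_R0 (fun m' => av n m * av n m' * cos ((INR m - INR m') * (t + s * node n j))) n)).
  rewrite <- dsum_diag. apply sum_eq; intros m Hm.
  rewrite (sum_swap (fun j m' => av n m * av n m' * cos ((INR m - INR m') * (t + s * node n j)))).
  apply sum_eq; intros m' Hm'.
  rewrite <- sum_mul_l, sum_cos_nodes by (auto; lia). reflexivity.
Qed.

Lemma sin2_cos u e : sin (u/2) ^ 2 * cos (e * u) =
  cos (e * u) / 2 - cos ((e + 1) * u) / 4 - cos ((e - 1) * u) / 4.
Proof.
  assert (H1 : sin (u/2) ^ 2 = (1 - cos u) / 2).
  { replace u with (2 * (u/2)) at 2 by field. rewrite cos_2a_sin. field. }
  replace ((e + 1) * u) with (e * u + u) by ring.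
  replace ((e - 1) * u) with (e * u - u) by ring.
  rewrite H1, cos_plus, cos_minus. field.
Qed.

Lemma Kk_sin_avg n t s : (s = 1 \/ s = -1) ->
  sum_f_R0 (fun j => sin ((t + s * node n j) / 2) ^ 2 * Kk n (t + s * node n j)) (S n) =
  INR (S (S n)) * (Sk n - Tk n) / 2.
Proof.
  intros Hs. set (N := INR (S (S n))).
  transitivity (sum_f_R0 (fun m => sum_f_R0 (fun m' =>
     av n m * av n m' * ((if Nat.eqb m m' then N else 0) / 2
       - (if Nat.eqb (S m) m' then N else 0) / 4 - (if Nat.eqb m (S m') then N else 0) / 4)) n) n).
  - unfold Kk.
    transitivity (sum_f_R0 (fun j => sum_f_R0 (fun m => sum_f_R0 (fun m' =>
      av n m * av n m' * (sin ((t + s * node n j) / 2) ^ 2 * cos ((INR m - INR m') * (t + s * node n j)))) n) n) (S n)).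
    { apply sum_eq; intros. rewrite sum_mul_l. apply sum_eq; intros.
      rewrite sum_mul_l. apply sum_eq; intros. ring. }
    rewrite (sum_swap (fun j m => sum_f_R0 (fun m' =>
      av n m * av n m' * (sin ((t + s * node n j) / 2) ^ 2 * cos ((INR m - INR m') * (t + s * node n j)))) n)).
    apply sum_eq; intros m Hm.
    rewrite (sum_swap (fun j m' =>
      av n m * av n m' * (sin ((t + s * node n j) / 2) ^ 2 * cos ((INR m - INR m') * (t + s * node n j))))).
    apply sum_eq; intros m' Hm'.
    rewrite <- sum_mul_l. f_equal.
    transitivity (sum_f_R0 (fun j => cos ((INR m - INR m') * (t + s * node n j))) (S n) / 2
      - sum_f_R0 (fun j => cos ((INR (S m) - INR m') * (t + s * node n j))) (S n) / 4
      - sum_f_R0 (fun j => cos ((INR m - INR (S m')) * (t + s * node n j))) (S n) / 4).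
    + unfold Rdiv. rewrite 3 sum_mul_r, <- 2 minus_sum. apply sum_eq; intros.
      pose proof (sin2_cos (t + s * node n i) (INR m - INR m')) as HH; unfold Rdiv in HH; rewrite HH, 2 S_INR.
      replace (INR m - INR m' + 1) with (INR m + 1 - INR m') by ring.
      replace (INR m - INR m' - 1) with (INR m - (INR m' + 1)) by ring. reflexivity.
    + rewrite 3 sum_cos_nodes by (auto; lia). reflexivity.
  - transitivity (sum_f_R0 (fun m => sum_f_R0 (fun m' => av n m * av n m' * (if Nat.eqb m m' then N else 0)) n) n / 2
      - sum_f_R0 (fun m => sum_f_R0 (fun m' => av n m * av n m' * (if Nat.eqb (S m) m' then N else 0)) n) n / 4
      - sum_f_R0 (fun m => sum_f_R0 (fun m' => av n m * av n m' * (if Nat.eqb m (S m') then N else 0)) n) n / 4).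
    + unfold Rdiv. rewrite 3 sum_mul_r, <- 2 minus_sum. apply sum_eq; intros.
      rewrite 3 sum_mul_r, <- 2 minus_sum. apply sum_eq; intros. ring.
    + rewrite dsum_diag, dsum_up, dsum_down. field.
Qed.

Lemma Sgen c n : sum_f_R0 (fun m => ((INR m + 1) * (c + 1 - INR m)) * ((INR m + 1) * (c + 1 - INR m))) n =
  let x := INR n in
  (1/1)*x^0*c^0 + (2/1)*x^0*c^1 + (1/1)*x^0*c^2 + (19/30)*x^1*c^0 + (8/3)*x^1*c^1 + (13/6)*x^1*c^2 + (-1/1)*x^2*c^0 + (-1/2)*x^2*c^1 + (3/2)*x^2*c^2 + (-1/3)*x^3*c^0 + (-5/3)*x^3*c^1 + (1/3)*x^3*c^2 + (1/2)*x^4*c^0 + (-1/2)*x^4*c^1 + (1/5)*x^5*c^0.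
Proof.
  induction n as [|n IH]; cbv zeta.
  - simpl. field.
  - cbn [sum_f_R0]. rewrite IH. cbv zeta. rewrite S_INR. field.
Qed.

Lemma Tgen c n : sum_f_R0 (fun m => ((INR m + 1) * (c + 1 - INR m)) * ((INR m + 1 + 1) * (c + 1 - (INR m + 1)))) n =
  let x := INR n in
  (2/1)*x^0*c^1 + (2/1)*x^0*c^2 + (-6/5)*x^1*c^0 + (2/3)*x^1*c^1 + (11/3)*x^1*c^2 + (-1/1)*x^2*c^0 + (-7/2)*x^2*c^1 + (2/1)*x^2*c^2 + (1/1)*x^3*c^0 + (-8/3)*x^3*c^1 + (1/3)*x^3*c^2 + (1/1)*x^4*c^0 + (-1/2)*x^4*c^1 + (1/5)*x^5*c^0.
Proof.
  induction n as [|n IH]; cbv zeta.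
  - simpl. field.
  - cbn [sum_f_R0]. rewrite IH. cbv zeta. rewrite S_INR. field.
Qed.

Lemma Sk_closed n : Sk n = (INR n + 2) * ((INR n + 2) ^ 4 - 1) / 30.
Proof. unfold Sk, av. rewrite Sgen. cbv zeta. field. Qed.

Lemma SkTk_closed n : Sk n - Tk n = (INR n + 1) * (INR n + 2) * (INR n + 3) / 6.
Proof.
  rewrite Sk_closed. unfold Tk, av.
  transitivity ((INR n + 2) * ((INR n + 2) ^ 4 - 1) / 30 -
    sum_f_R0 (fun m => ((INR m + 1) * (INR n + 1 - INR m)) * ((INR m + 1 + 1) * (INR n + 1 - (INR m + 1)))) n).
  - f_equal. apply sum_eq; intros. rewrite S_INR. reflexivity.
  - rewrite Tgen. cbv zeta. field.
Qed.

Definition Jop (n : nat) (g : R -> R) (t : R) : R :=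
  / (INR (S (S n)) * Sk n) *
  sum_f_R0 (fun j => g (node n j) * ((Kk n (t + -1 * node n j) + Kk n (t + 1 * node n j)) / 2)) (S n).

Lemma abs_bound y e : 0 < e -> Rabs y <= (e + y ^ 2 / e) / 2.
Proof.
  intros He. assert (H : y ^ 2 = Rabs y ^ 2) by (unfold Rabs; destruct Rcase_abs; ring).
  rewrite H. apply (Rmult_le_reg_r (2 * e)); [lra|].
  replace ((e + Rabs y ^ 2 / e) / 2 * (2 * e)) with (e * e + Rabs y ^ 2) by (field; lra).
  pose proof (pow2_ge_0 (Rabs y - e)). nra.
Qed.

Lemma Sk_pos n : 0 < Sk n.
Proof.
  rewrite Sk_closed. pose proof (pos_INR n).
  apply Rdiv_lt_0_compat; [|lra]. apply Rmult_lt_0_compat; [lra|].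
  assert (1 < (INR n + 2) ^ 2) by nra. nra.
Qed.

Lemma Jop_err n g L t : (1 <= n)%nat -> 0 <= L ->
  (forall t s sg, (sg = 1 \/ sg = -1) -> Rabs (g t - g s) <= L * Rabs (sin ((t + sg * s) / 2))) ->
  Rabs (g t - Jop n g t) <= 2 * L / INR n.
Proof.
  intros Hn HL Hg.
  set (N := INR (S (S n))). set (Sn := Sk n). set (e := / INR n).
  assert (HnR : 1 <= INR n) by (apply (le_INR 1); auto).
  assert (HN : 0 < N) by (apply lt_0_INR; lia).
  assert (HS : 0 < Sn) by apply Sk_pos.
  assert (He : 0 < e) by (apply Rinv_0_lt_compat; lra).
  set (Km := fun j => Kk n (t + -1 * node n j)). set (Kp := fun j => Kk n (t + 1 * node n j)).
  assert (E1 : g t - Jop n g t = / (N * Sn) *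
     sum_f_R0 (fun j => (g t - g (node n j)) * ((Km j + Kp j) / 2)) (S n)).
  { unfold Jop. fold N Sn.
    assert (Hsum : sum_f_R0 (fun j => (Km j + Kp j) / 2) (S n) = N * Sn).
    { unfold Rdiv. rewrite <- sum_mul_r, plus_sum. unfold Km, Kp.
      rewrite 2 Kk_avg by lra. fold N Sn. field. }
    transitivity (/ (N * Sn) * (g t * sum_f_R0 (fun j => (Km j + Kp j) / 2) (S n)
       - sum_f_R0 (fun j => g (node n j) * ((Km j + Kp j) / 2)) (S n))).
    - rewrite Hsum. unfold Km, Kp. field. split; lra.
    - f_equal. rewrite sum_mul_l, <- minus_sum. apply sum_eq; intros; ring. }
  rewrite E1, Rabs_mult, Rabs_right by (apply Rle_ge, Rlt_le, Rinv_0_lt_compat; nra).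
  set (sm := fun j => sin ((t + -1 * node n j) / 2)). set (sp := fun j => sin ((t + 1 * node n j) / 2)).
  assert (Hb : sum_f_R0 (fun j => Rabs ((g t - g (node n j)) * ((Km j + Kp j) / 2))) (S n) <=
     sum_f_R0 (fun j => L / 4 * ((e * Km j + sm j ^ 2 * Km j / e) + (e * Kp j + sp j ^ 2 * Kp j / e))) (S n)).
  { apply sum_Rle; intros j Hj.
    assert (K1 : 0 <= Km j) by apply Kk_nonneg. assert (K2 : 0 <= Kp j) by apply Kk_nonneg.
    rewrite Rabs_mult, (Rabs_right ((Km j + Kp j) / 2)) by lra.
    pose proof (Hg t (node n j) (-1) ltac:(lra)) as G1. pose proof (Hg t (node n j) 1 ltac:(lra)) as G2.
    fold (sm j) in G1. fold (sp j) in G2.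
    pose proof (abs_bound (sm j) e He) as A1. pose proof (abs_bound (sp j) e He) as A2.
    assert (B1 : Rabs (g t - g (node n j)) * Km j <= L * ((e + sm j ^ 2 / e) / 2) * Km j).
    { apply Rmult_le_compat_r; auto. eapply Rle_trans; [apply G1|]. apply Rmult_le_compat_l; auto. }
    assert (B2 : Rabs (g t - g (node n j)) * Kp j <= L * ((e + sp j ^ 2 / e) / 2) * Kp j).
    { apply Rmult_le_compat_r; auto. eapply Rle_trans; [apply G2|]. apply Rmult_le_compat_l; auto. }
    replace (Rabs (g t - g (node n j)) * ((Km j + Kp j) / 2)) with
      ((Rabs (g t - g (node n j)) * Km j + Rabs (g t - g (node n j)) * Kp j) / 2) by field.
    replace (L / 4 * (e * Km j + sm j ^ 2 * Km j / e + (e * Kp j + sp j ^ 2 * Kp j / e))) with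
      ((L * ((e + sm j ^ 2 / e) / 2) * Km j + L * ((e + sp j ^ 2 / e) / 2) * Kp j) / 2) by (field; lra).
    lra. }
  assert (Hc : sum_f_R0 (fun j => L / 4 * ((e * Km j + sm j ^ 2 * Km j / e) + (e * Kp j + sp j ^ 2 * Kp j / e))) (S n)
     = L / 2 * N * (e * Sn + (Sn - Tk n) / 2 / e)).
  { rewrite <- sum_mul_l, 3 plus_sum. unfold Rdiv. rewrite <- 2 sum_mul_r.
    rewrite <- !sum_mul_l. unfold Km, Kp, sm, sp.
    rewrite 2 Kk_avg by lra.
    rewrite (Kk_sin_avg n t (-1)) by lra. rewrite (Kk_sin_avg n t 1) by lra. fold N Sn.
    field. lra. }
  eapply Rle_trans; [apply Rmult_le_compat_l; [apply Rlt_le, Rinv_0_lt_compat; nra| eapply Rle_trans; [apply sum_f_R0_triangle|apply Hb]]|].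
  rewrite Hc.
  replace (/ (N * Sn) * (L / 2 * N * (e * Sn + (Sn - Tk n) / 2 / e))) with
    (L / 2 * (e + (Sn - Tk n) / 2 / e / Sn)) by (field; split; lra).
  unfold Sn. rewrite SkTk_closed, Sk_closed. unfold e.
  apply (Rmult_le_reg_r (INR n)); [lra|].
  set (x := INR n) in *.
  replace (2 * L / x * x) with (2 * L) by (field; lra).
  assert (Hx4 : (x + 2) ^ 4 - 1 <> 0).
  { assert (1 < (x + 2) ^ 2) by nra. assert ((x+2)^4 = (x+2)^2*(x+2)^2) by ring. nra. }
  assert (Hq : (x + 1) * (x + 2) * (x + 3) / 6 / 2 / / x / ((x + 2) * ((x + 2) ^ 4 - 1) / 30) * x
     <= 5 / 2).
  { replace ((x + 1) * (x + 2) * (x + 3) / 6 / 2 / / x / ((x + 2) * ((x + 2) ^ 4 - 1) / 30) * x)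
      with (5 * x ^ 2 / (2 * ((x + 2) ^ 2 + 1))).
    - apply (Rmult_le_reg_r (2 * ((x + 2) ^ 2 + 1))); [nra|].
      replace (5 * x ^ 2 / (2 * ((x + 2) ^ 2 + 1)) * (2 * ((x + 2) ^ 2 + 1))) with (5 * x ^ 2) by (field; nra).
      nra.
    - field. repeat split; try lra; nra. }
  replace (L / 2 * (/ x + (x + 1) * (x + 2) * (x + 3) / 6 / 2 / / x / ((x + 2) * ((x + 2) ^ 4 - 1) / 30)) * x)
    with (L / 2 * (1 + (x + 1) * (x + 2) * (x + 3) / 6 / 2 / / x / ((x + 2) * ((x + 2) ^ 4 - 1) / 30) * x))
    by (field; repeat split; try lra; nra).
  nra.
Qed.

Fixpoint Qf (ts : R) (d : nat) (x : R) : R :=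
  match d with
  | O => 1
  | S d' => match d' with
            | O => 2 * x / ts - 1
            | S d'' => (4 * x / ts - 2) * Qf ts d' x - Qf ts d'' x
            end
  end.

Lemma Qf_cos ts d t : 0 < ts -> Qf ts d (ts * (1 + cos t) / 2) = cos (INR d * t).
Proof.
  intros Hts.
  assert (H : forall d, Qf ts d (ts * (1 + cos t) / 2) = cos (INR d * t) /\
                        Qf ts (S d) (ts * (1 + cos t) / 2) = cos (INR (S d) * t)).
  { clear d. intros d. induction d as [|d IH].
    - split; simpl.
      + rewrite Rmult_0_l, cos_0. reflexivity.
      + rewrite Rmult_1_l. field. lra.
    - destruct IH as [IH1 IH2]. split; auto.
      change (Qf ts (S (S d)) (ts * (1 + cos t) / 2)) with
        ((4 * (ts * (1 + cos t) / 2) / ts - 2) * Qf ts (S d) (ts * (1 + cos t) / 2) - Qf ts d (ts * (1 + cos t) / 2)).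
      rewrite IH1, IH2. rewrite !S_INR.
      replace ((INR d + 1 + 1) * t) with ((INR d + 1) * t + t) by ring.
      replace (INR d * t) with ((INR d + 1) * t - t) by ring.
      rewrite cos_plus, cos_minus. field. lra. }
  apply H.
Qed.

Lemma Qf_poly ts d : 0 < ts -> is_poly d ((4 / ts + 3) ^ d) (Qf ts d).
Proof.
  intros Hts. set (K0 := 4 / ts + 3).
  assert (HK : 1 <= K0) by (unfold K0; assert (0 < 4/ts) by (apply Rdiv_lt_0_compat; lra); lra).
  assert (A1 : Rabs (-1) = 1) by (rewrite Rabs_left; lra).
  assert (A2 : Rabs (-2) = 2) by (rewrite Rabs_left; lra).
  assert (H0 : is_poly 0 1 (Qf ts 0)).
  { eapply is_poly_ext; [|apply is_poly_le with (d := 0%nat) (B := Rabs 1); [lia| |apply is_poly_const]].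
    - intros; reflexivity.
    - rewrite Rabs_R1; lra. }
  assert (H1 : is_poly 1 K0 (Qf ts 1)).
  { eapply is_poly_ext.
    2: { apply is_poly_le with (d := 1%nat) (B := Rabs (-1) + Rabs (2 / ts) * Rabs 1); [lia| |].
         2: { apply is_poly_add; [apply is_poly_le with (d := 0%nat) (B := Rabs (-1)); [lia|lra|apply is_poly_const]|].
              apply is_poly_scal. apply is_poly_mulx. apply is_poly_const. }
         rewrite Rabs_R1, A1, Rabs_right; [|apply Rle_ge, Rlt_le, Rdiv_lt_0_compat; lra].
         unfold K0. assert (0 < / ts) by (apply Rinv_0_lt_compat; lra). unfold Rdiv. lra. }
    intros x. simpl. field. lra. }
  assert (H : forall d, is_poly d (K0 ^ d) (Qf ts d) /\ is_poly (S d) (K0 ^ S d) (Qf ts (S d))).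
  { clear d. intros d. induction d as [|d [IH1 IH2]].
    - split; simpl; [auto| rewrite Rmult_1_r; auto].
    - split; auto.
      eapply is_poly_ext.
      2: { apply is_poly_le with (d := S (S d)) (B := (Rabs (4 / ts) * K0 ^ S d + Rabs (-2) * K0 ^ S d) + Rabs (-1) * K0 ^ d); [lia| |].
           2: { apply is_poly_add; [apply is_poly_add|].
                - apply is_poly_scal. apply is_poly_mulx. apply IH2.
                - apply is_poly_le with (d := S d) (B := Rabs (-2) * K0 ^ S d); [lia|lra|]. apply is_poly_scal, IH2.
                - apply is_poly_le with (d := d) (B := Rabs (-1) * K0 ^ d); [lia|lra|]. apply is_poly_scal, IH1. }
           rewrite A1, A2.
           rewrite Rabs_right by (apply Rle_ge, Rlt_le, Rdiv_lt_0_compat; lra).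
           assert (0 < K0 ^ d) by (apply pow_lt; lra).
           simpl. replace (4 / ts) with (K0 - 3) by (unfold K0; ring). nra. }
      intros x. cbv beta. change (Qf ts (S (S d)) x) with ((4 * x / ts - 2) * Qf ts (S d) x - Qf ts d x).
      field. lra. }
  apply H.
Qed.

Definition distn (m m' : nat) : nat := ((m - m') + (m' - m))%nat.

Lemma cos_dist m m' t : cos ((INR m - INR m') * t) = cos (INR (distn m m') * t).
Proof.
  unfold distn. destruct (Nat.le_ge_cases m' m).
  - replace (m' - m)%nat with 0%nat by lia. rewrite Nat.add_0_r, minus_INR by lia. reflexivity.
  - replace (m - m')%nat with 0%nat by lia. rewrite Nat.add_0_l, minus_INR by lia.
    rewrite <- cos_neg. f_equal. ring.
Qed.

Definition Pop (ts : R) (n : nat) (g : R -> R) (x : R) : R :=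
  sum_f_R0 (fun j => sum_f_R0 (fun m => sum_f_R0 (fun m' =>
    (/ (INR (S (S n)) * Sk n) * g (node n j) * (av n m * av n m' * cos ((INR m - INR m') * node n j)))
      * Qf ts (distn m m') x) n) n) (S n).

Lemma Jop_Pop ts n g t : 0 < ts -> Jop n g t = Pop ts n g (ts * (1 + cos t) / 2).
Proof.
  intros Hts. pose proof (fun d => Qf_cos ts d t Hts) as HQ.
  set (x := ts * (1 + cos t) / 2) in *. clearbody x.
  unfold Jop, Pop. rewrite sum_mul_l. apply sum_eq; intros j _.
  unfold Kk. unfold Rdiv. rewrite <- plus_sum, sum_mul_r, 2 sum_mul_l. apply sum_eq; intros m _.
  rewrite <- plus_sum, sum_mul_r, 2 sum_mul_l. apply sum_eq; intros m' _.
  rewrite HQ. rewrite <- cos_dist.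
  replace ((INR m - INR m') * (t + -1 * node n j)) with ((INR m - INR m') * t - (INR m - INR m') * node n j) by ring.
  replace ((INR m - INR m') * (t + 1 * node n j)) with ((INR m - INR m') * t + (INR m - INR m') * node n j) by ring.
  rewrite cos_minus, cos_plus. field. split; [pose proof (Sk_pos n); lra| apply not_0_INR; lia].
Qed.

Lemma av_bound n m : (m <= n)%nat -> Rabs (av n m) <= (INR n + 1) ^ 2.
Proof.
  intros H. unfold av. assert (INR m <= INR n) by (apply le_INR; auto). pose proof (pos_INR m).
  rewrite Rabs_right by (apply Rle_ge; apply Rmult_le_pos; lra).
  simpl. apply Rmult_le_compat; lra.
Qed.

Lemma Sk_ge1 n : 1 <= Sk n.
Proof.
  rewrite Sk_closed. pose proof (pos_INR n). set (y := INR n + 2).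
  assert (4 <= y ^ 2) by (unfold y; nra).
  assert (16 <= y ^ 4) by (replace (y ^ 4) with (y ^ 2 * y ^ 2) by ring; nra).
  apply (Rmult_le_reg_r 30); [lra|]. replace (y * (y ^ 4 - 1) / 30 * 30) with (y * (y ^ 4 - 1)) by field.
  assert (2 <= y) by (unfold y; lra). nra.
Qed.

Lemma Pop_poly ts n g G : 0 < ts -> 0 <= G -> (forall j, Rabs (g (node n j)) <= G) ->
  is_poly n (G * (INR n + 1) ^ 6 * (4 / ts + 3) ^ n) (Pop ts n g).
Proof.
  intros Hts HG Hg. set (K0 := 4 / ts + 3).
  assert (HK : 1 <= K0) by (unfold K0; assert (0 < 4/ts) by (apply Rdiv_lt_0_compat; lra); lra).
  set (N := INR (S (S n))). set (Sn := Sk n).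
  assert (HN : 0 < N) by (apply lt_0_INR; lia).
  assert (HS : 1 <= Sn) by apply Sk_ge1.
  set (cb := / (N * Sn) * G * ((INR n + 1) ^ 2 * (INR n + 1) ^ 2)).
  assert (Hterm : forall j m m', (m <= n)%nat -> (m' <= n)%nat ->
     is_poly n (cb * K0 ^ n) (fun x => (/ (N * Sn) * g (node n j) * (av n m * av n m' * cos ((INR m - INR m') * node n j)))
      * Qf ts (distn m m') x)).
  { intros j m m' Hm Hm'.
    eapply is_poly_le; [| |apply is_poly_scal, Qf_poly, Hts]; [unfold distn; lia|].
    fold K0. apply Rmult_le_compat; [apply Rabs_pos| apply pow_le; lra| |apply Rle_pow; auto; unfold distn; lia].
    unfold cb. rewrite !Rabs_mult. rewrite Rabs_right by (apply Rle_ge, Rlt_le, Rinv_0_lt_compat; nra).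
    assert (Hc : Rabs (cos ((INR m - INR m') * node n j)) <= 1) by (apply Rabs_le, COS_bound).
    pose proof (av_bound n m Hm). pose proof (av_bound n m' Hm').
    assert (0 < / (N * Sn)) by (apply Rinv_0_lt_compat; nra).
    apply Rmult_le_compat.
    { apply Rmult_le_pos; [lra| apply Rabs_pos]. }
    { apply Rmult_le_pos; [apply Rmult_le_pos|]; apply Rabs_pos. }
    { apply Rmult_le_compat_l; [lra| apply Hg]. }
    rewrite <- (Rmult_1_r ((INR n + 1) ^ 2 * (INR n + 1) ^ 2)).
    apply Rmult_le_compat; try apply Rabs_pos; auto.
    - apply Rmult_le_pos; apply Rabs_pos.
    - apply Rmult_le_compat; try apply Rabs_pos; auto. }
  eapply is_poly_le with (d := n) (B := sum_f_R0 (fun j => sum_f_R0 (fun m => sum_f_R0 (fun m' => cb * K0 ^ n) n) n) (S n)); [lia| |].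
  - rewrite !sum_cte. fold N. unfold cb.
    replace (/ (N * Sn) * G * ((INR n + 1) ^ 2 * (INR n + 1) ^ 2) * K0 ^ n * INR (S n) * INR (S n) * N)
      with (/ Sn * (G * (INR n + 1) ^ 6 * K0 ^ n)) by (rewrite S_INR; field; lra).
    assert (0 <= G * (INR n + 1) ^ 6 * K0 ^ n).
    { apply Rmult_le_pos; [apply Rmult_le_pos; auto; apply pow_le; pose proof (pos_INR n); lra| apply pow_le; lra]. }
    assert (/ Sn <= 1) by (rewrite <- Rinv_1; apply Rinv_le_contravar; lra).
    assert (0 < / Sn) by (apply Rinv_0_lt_compat; lra). nra.
  - unfold Pop. fold N Sn. apply is_poly_sum; intros j Hj. apply is_poly_sum; intros m Hm.
    apply is_poly_sum; intros m' Hm'. apply Hterm; auto.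
Qed.

Lemma Series_zero : Series (fun _ => 0) = 0.
Proof.
  rewrite (Series_ext _ (fun n => 0 * 1)) by (intros; ring).
  rewrite Series_scal_l. ring.
Qed.

Lemma Series_nonneg (a : nat -> R) : (forall n, 0 <= a n) -> ex_series a -> 0 <= Series a.
Proof.
  intros H He. rewrite <- Series_zero. apply Series_le; auto. intros; split; [lra|auto].
Qed.


Lemma ex_Z (w : nat -> R) (ts t0 : R) (Hts : 0 < ts) (Hw : forall x, 0 < w x) (Ht0 : ts < t0) (Hex : ex_series (fun x => w x * t0 ^ x)) th : 0 <= th <= t0 -> ex_series (fun x => w x * th ^ x).
Proof.
  intros Hth. apply (@ex_series_le R_AbsRing R_CompleteNormedModule) with (b := fun x => w x * t0 ^ x); auto.
  intros n. change (norm (w n * th ^ n)) with (Rabs (w n * th ^ n)).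
  rewrite Rabs_right.
  - apply Rmult_le_compat_l; [apply Rlt_le, Hw|apply pow_incr; lra].
  - apply Rle_ge, Rmult_le_pos; [apply Rlt_le, Hw| apply pow_le; lra].
Qed.

Lemma Z_lower (w : nat -> R) (ts t0 : R) (Hts : 0 < ts) (Hw : forall x, 0 < w x) (Ht0 : ts < t0) (Hex : ex_series (fun x => w x * t0 ^ x)) th : 0 <= th <= t0 -> w 0%nat <= Zfun w th.
Proof.
  intros Hth. unfold Zfun. rewrite Series_incr_1 by (apply (ex_Z w ts t0); auto). simpl.
  rewrite Rmult_1_r. cut (0 <= Series (fun k => w (S k) * (th * th ^ k))); [lra|].
  apply Series_nonneg.
  - intros; apply Rmult_le_pos; [apply Rlt_le, Hw|]. apply Rmult_le_pos; [lra|apply pow_le; lra].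
  - apply (ex_series_incr_1 (fun x => w x * th ^ x)). apply (ex_Z w ts t0); auto.
Qed.

Lemma Z_upper (w : nat -> R) (ts t0 : R) (Hts : 0 < ts) (Hw : forall x, 0 < w x) (Ht0 : ts < t0) (Hex : ex_series (fun x => w x * t0 ^ x)) th : 0 <= th <= t0 -> Zfun w th <= Zfun w t0.
Proof.
  intros Hth. unfold Zfun. apply Series_le; auto. intros n. split.
  - apply Rmult_le_pos; [apply Rlt_le, Hw| apply pow_le; lra].
  - apply Rmult_le_compat_l; [apply Rlt_le, Hw|apply pow_incr; lra].
Qed.

Lemma pow_lip (w : nat -> R) (ts t0 : R) (Hts : 0 < ts) (Hw : forall x, 0 < w x) (Ht0 : ts < t0) (Hex : ex_series (fun x => w x * t0 ^ x)) s t x : 0 <= s <= ts -> 0 <= t <= ts ->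
  ts * Rabs (s ^ x - t ^ x) <= INR x * ts ^ x * Rabs (s - t).
Proof.
  intros Hs Ht. induction x as [|x IH].
  - simpl. replace (1 - 1) with 0 by ring. rewrite Rabs_R0. lra.
  - replace (s ^ S x - t ^ S x) with (s * (s ^ x - t ^ x) + t ^ x * (s - t)) by (simpl; ring).
    assert (A : Rabs (s * (s ^ x - t ^ x) + t ^ x * (s - t)) <= s * Rabs (s ^ x - t ^ x) + ts ^ x * Rabs (s - t)).
    { eapply Rle_trans; [apply Rabs_triang|]. rewrite 2 Rabs_mult.
      rewrite (Rabs_right s) by lra. rewrite (Rabs_right (t ^ x)) by (apply Rle_ge, pow_le; lra).
      apply Rplus_le_compat_l. apply Rmult_le_compat_r; [apply Rabs_pos|apply pow_incr; lra]. }
    rewrite S_INR. simpl.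
    pose proof (Rabs_pos (s ^ x - t ^ x)). pose proof (Rabs_pos (s - t)).
    assert (0 <= ts ^ x) by (apply pow_le; lra).
    assert (s * (ts * Rabs (s ^ x - t ^ x)) <= ts * (INR x * ts ^ x * Rabs (s - t))).
    { apply Rmult_le_compat; try lra. apply Rmult_le_pos; lra. }
    nra.
Qed.

Lemma bern (w : nat -> R) (ts t0 : R) (Hts : 0 < ts) (Hw : forall x, 0 < w x) (Ht0 : ts < t0) (Hex : ex_series (fun x => w x * t0 ^ x)) x : INR x * ts ^ x * (t0 - ts) <= ts * t0 ^ x.
Proof.
  induction x as [|x IH].
  - simpl. assert (0 < ts * 1) by lra. lra.
  - rewrite S_INR. simpl.
    assert (ts ^ x <= t0 ^ x) by (apply pow_incr; lra).
    assert (0 <= ts ^ x) by (apply pow_le; lra).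
    assert (A1 : ts * (INR x * ts ^ x * (t0 - ts)) <= ts * (ts * t0 ^ x)) by (apply Rmult_le_compat_l; lra).
    assert (A2 : 0 <= ts * (t0 - ts) * (t0 ^ x - ts ^ x)) by (apply Rmult_le_pos; [apply Rmult_le_pos|]; lra).
    nra.
Qed.

Lemma Z_lip (w : nat -> R) (ts t0 : R) (Hts : 0 < ts) (Hw : forall x, 0 < w x) (Ht0 : ts < t0) (Hex : ex_series (fun x => w x * t0 ^ x)) s t : 0 <= s <= ts -> 0 <= t <= ts ->
  Rabs (Zfun w s - Zfun w t) <= Zfun w t0 / (t0 - ts) * Rabs (s - t).
Proof.
  intros Hs Ht. unfold Zfun.
  assert (Hp : forall x, Rabs (w x * s ^ x - w x * t ^ x) <= w x * t0 ^ x * (Rabs (s - t) / (t0 - ts))).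
  { intros x. replace (w x * s ^ x - w x * t ^ x) with (w x * (s ^ x - t ^ x)) by ring.
    rewrite Rabs_mult, Rabs_right by (apply Rle_ge, Rlt_le, Hw).
    rewrite Rmult_assoc. apply Rmult_le_compat_l; [apply Rlt_le, Hw|].
    pose proof (pow_lip w ts t0 Hts Hw Ht0 Hex s t x Hs Ht). pose proof (bern w ts t0 Hts Hw Ht0 Hex x).
    pose proof (Rabs_pos (s - t)).
    apply (Rmult_le_reg_l (ts * (t0 - ts))); [nra|].
    replace (ts * (t0 - ts) * (t0 ^ x * (Rabs (s - t) / (t0 - ts)))) with (ts * t0 ^ x * Rabs (s - t)) by (field; lra).
    assert (ts * Rabs (s ^ x - t ^ x) * (t0 - ts) <= INR x * ts ^ x * Rabs (s - t) * (t0 - ts)).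
    { apply Rmult_le_compat_r; lra. }
    assert (INR x * ts ^ x * (t0 - ts) * Rabs (s - t) <= ts * t0 ^ x * Rabs (s - t)).
    { apply Rmult_le_compat_r; lra. }
    nra. }
  rewrite <- Series_minus by (apply (ex_Z w ts t0); auto; lra).
  assert (Hb : ex_series (fun x => w x * t0 ^ x * (Rabs (s - t) / (t0 - ts)))).
  { apply (ex_series_scal_r _ (fun x => w x * t0 ^ x)). auto. }
  eapply Rle_trans; [apply Series_Rabs|].
  - apply (@ex_series_le R_AbsRing R_CompleteNormedModule) with (b := fun x => w x * t0 ^ x * (Rabs (s - t) / (t0 - ts))); auto.
    intros n. change (norm (Rabs (w n * s ^ n - w n * t ^ n))) with (Rabs (Rabs (w n * s ^ n - w n * t ^ n))).
    rewrite Rabs_Rabsolu. apply Hp.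
  - eapply Rle_trans; [apply Series_le; [intros n; split; [apply Rabs_pos| apply Hp]| exact Hb]|].
    rewrite Series_scal_r. right. field. lra.
Qed.


Lemma fold_max_ge (l : list R) x : In x l -> x <= fold_right Rmax 0 l.
Proof.
  induction l as [|a l IH]; simpl; [tauto|]. intros [->|H].
  - apply Rmax_l.
  - eapply Rle_trans; [apply IH; auto| apply Rmax_r].
Qed.

Lemma fold_max_nonneg (l : list R) : 0 <= fold_right Rmax 0 l.
Proof. induction l as [|a l IH]; simpl; [lra|]. eapply Rle_trans; [apply IH|apply Rmax_r]. Qed.

Lemma maxinv_ge w k x : (1 <= x <= k)%nat -> / w x <= maxinv w k.
Proof.
  intros H. unfold maxinv. apply fold_max_ge. apply (in_map (fun x => / w x)).
  apply in_seq. lia.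
Qed.

Lemma maxinv_nonneg w k : 0 <= maxinv w k.
Proof. apply fold_max_nonneg. Qed.

Lemma pow_ge_self y k : 1 <= y -> (1 <= k)%nat -> y <= y ^ k.
Proof. intros. rewrite <- (pow_1 y) at 1. apply Rle_pow; auto. Qed.

Lemma nat_pow2 k : INR k + 1 <= 2 ^ k.
Proof.
  induction k as [|k IH]; [simpl; lra|]. rewrite S_INR. simpl (2 ^ S k).
  assert (1 <= 2 ^ k) by (apply pow_R1_Rle; lra). lra.
Qed.

Theorem lemma5p4 (w : nat -> R) (theta_star : R) :
  0 < theta_star ->
  (forall x, 0 < w x) ->
  (* radius of convergence of sum w(x) theta^x exceeds theta_star *)
  (exists t, theta_star < t /\ ex_series (fun x => w x * t ^ x)) ->
  exists C : R, 0 < C /\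
    forall l : R -> R,
      (forall s t, 0 <= s <= theta_star -> 0 <= t <= theta_star ->
         Rabs (l s - l t) <= Rabs (s - t)) ->
      l 0 = 0 ->
      forall k : nat, (1 <= k)%nat ->
        exists b : nat -> R,
          (forall theta, 0 <= theta <= theta_star ->
             Rabs (l theta - sum_f_R0 (fun x => b x * fmass w x theta) k)
               <= C / INR k) /\
          (forall x, (x <= k)%nat -> Rabs (b x) <= C ^ k * maxinv w k).
Proof.
  intros Hts Hw [t0 [Ht0 Hex]].
  set (ts := theta_star) in *.
  set (Zt := Zfun w t0).
  assert (Hw0 : 0 < w 0%nat) by apply Hw.
  assert (Hw1 : 0 < w 1%nat) by apply Hw.
  assert (HZ : forall a, 0 <= a <= ts -> w 0%nat <= Zfun w a <= Zt).
  { intros a Ha. split; [eapply (Z_lower w ts t0); eauto; lra| eapply (Z_upper w ts t0); eauto; lra]. }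
  assert (HZt : w 0%nat <= Zt) by (unfold Zt; eapply (Z_lower w ts t0); eauto; lra).
  set (LZ := Zt / (t0 - ts)).
  assert (HLZ : 0 <= LZ) by (apply Rdiv_le_0_compat; lra).
  set (Lh := ts * LZ + Zt).
  assert (HLh : 0 <= Lh) by (unfold Lh; assert (0 <= ts * LZ) by (apply Rmult_le_pos; lra); lra).
  set (G := ts * Zt). assert (HG : 0 <= G) by (unfold G; apply Rmult_le_pos; lra).
  set (K0 := 4 / ts + 3).
  assert (HK : 1 <= K0) by (unfold K0; assert (0 < 4/ts) by (apply Rdiv_lt_0_compat; lra); lra).
  set (r := w 1%nat / w 0%nat). assert (Hr : 0 <= r) by (unfold r; apply Rdiv_le_0_compat; lra).
  set (E := 2 * Lh * ts / w 0%nat). assert (HE : 0 <= E) by (unfold E; apply Rdiv_le_0_compat; [apply Rmult_le_pos; [apply Rmult_le_pos|]|]; lra).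
  exists (64 * K0 * (1 + G) * (1 + r) * (1 + E)).
  assert (HC1 : 1 <= 64 * K0 * (1 + G) * (1 + r) * (1 + E)).
  { assert (1 <= 64 * K0) by lra.
    assert (1 <= 64 * K0 * (1 + G)) by nra.
    assert (1 <= 64 * K0 * (1 + G) * (1 + r)) by nra. nra. }
  split; [lra|].
  intros l Hl Hl0 k Hk.
  set (h := fun a => l a * Zfun w a).
  set (gg := fun t => h (ts * (1 + cos t) / 2)).
  assert (Hxr : forall t, 0 <= ts * (1 + cos t) / 2 <= ts).
  { intros t. pose proof (COS_bound t). split; nra. }
  assert (Hlb : forall a, 0 <= a <= ts -> Rabs (l a) <= ts).
  { intros a Ha. pose proof (Hl a 0 Ha ltac:(lra)) as H. rewrite Hl0, Rminus_0_r, Rminus_0_r in H.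
    rewrite (Rabs_right a) in H by lra. lra. }
  assert (Hhl : forall a b, 0 <= a <= ts -> 0 <= b <= ts -> Rabs (h a - h b) <= Lh * Rabs (a - b)).
  { intros a b Ha Hb. unfold h.
    replace (l a * Zfun w a - l b * Zfun w b) with (l a * (Zfun w a - Zfun w b) + Zfun w b * (l a - l b)) by ring.
    eapply Rle_trans; [apply Rabs_triang|]. rewrite 2 Rabs_mult.
    pose proof (Hlb a Ha). pose proof (HZ b Hb).
    assert (Rabs (Zfun w a - Zfun w b) <= LZ * Rabs (a - b)) by (unfold LZ, Zt; eapply (Z_lip w ts t0); eauto).
    pose proof (Hl a b Ha Hb).
    rewrite (Rabs_right (Zfun w b)) by lra.
    pose proof (Rabs_pos (Zfun w a - Zfun w b)). pose proof (Rabs_pos (l a)). pose proof (Rabs_pos (l a - l b)). pose proof (Rabs_pos (a - b)).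
    unfold Lh.
    assert (Rabs (l a) * Rabs (Zfun w a - Zfun w b) <= ts * (LZ * Rabs (a - b))) by (apply Rmult_le_compat; lra).
    assert (Zfun w b * Rabs (l a - l b) <= Zt * Rabs (a - b)) by (apply Rmult_le_compat; lra).
    nra. }
  assert (Hgl : forall t s sg, (sg = 1 \/ sg = -1) -> Rabs (gg t - gg s) <= Lh * ts * Rabs (sin ((t + sg * s) / 2))).
  { intros t s sg Hsg. unfold gg. eapply Rle_trans; [apply Hhl; apply Hxr|].
    rewrite Rmult_assoc. apply Rmult_le_compat_l; auto.
    replace (ts * (1 + cos t) / 2 - ts * (1 + cos s) / 2) with (ts / 2 * (cos t - cos s)) by field.
    rewrite form2. rewrite !Rabs_mult, (Rabs_right (ts/2)) by lra.
    pose proof (Rabs_le (sin ((t - s) / 2)) 1 (SIN_bound _)). pose proof (Rabs_le (sin ((t + s) / 2)) 1 (SIN_bound _)).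
    pose proof (Rabs_pos (sin ((t - s) / 2))). pose proof (Rabs_pos (sin ((t + s) / 2))).
    assert (A2 : Rabs (-2) = 2) by (rewrite Rabs_left; lra). rewrite A2.
    destruct Hsg as [-> | ->].
    - rewrite Rmult_1_l.
      assert (0 <= ts * Rabs (sin ((t + s) / 2)) * (1 - Rabs (sin ((t - s) / 2)))) by (apply Rmult_le_pos; [apply Rmult_le_pos|]; lra).
      nra.
    - replace (t + -1 * s) with (t - s) by ring.
      assert (0 <= ts * Rabs (sin ((t - s) / 2)) * (1 - Rabs (sin ((t + s) / 2)))) by (apply Rmult_le_pos; [apply Rmult_le_pos|]; lra).
      nra. }
  assert (HgG : forall j, Rabs (gg (node k j)) <= G).
  { intros j. unfold gg, h, G. rewrite Rabs_mult. pose proof (Hxr (node k j)) as Hx.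
    pose proof (Hlb _ Hx). pose proof (HZ _ Hx). rewrite (Rabs_right (Zfun w _)) by lra.
    apply Rmult_le_compat; try lra. apply Rabs_pos. }
  destruct (Pop_poly ts k gg G Hts HG HgG) as [c [Hc1 Hc2]].
  exists (fun x => c x / w x). split.
  - intros th Hth.
    assert (Hsum : sum_f_R0 (fun x => c x / w x * fmass w x th) k = gfun w th * Pop ts k gg th).
    { rewrite Hc2, sum_mul_l. apply sum_eq; intros i _. unfold fmass. field.
      pose proof (Hw i); lra. }
    rewrite Hsum.
    set (t := acos (2 * th / ts - 1)).
    assert (Hct : cos t = 2 * th / ts - 1).
    { unfold t. apply cos_acos. split.
      - apply (Rplus_le_reg_r 1). replace (2 * th / ts - 1 + 1) with (2 * th / ts) by ring.
        assert (0 <= 2 * th / ts) by (apply Rdiv_le_0_compat; lra). lra.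
      - apply (Rplus_le_reg_r 1). replace (2 * th / ts - 1 + 1) with (2 * th / ts) by ring.
        apply (Rmult_le_reg_r ts); [lra|]. unfold Rdiv. rewrite Rmult_assoc, Rinv_l by lra. lra. }
    assert (Hx : ts * (1 + cos t) / 2 = th) by (rewrite Hct; field; lra).
    assert (HP : Pop ts k gg th = Jop k gg t) by (rewrite (Jop_Pop ts) by auto; rewrite Hx; reflexivity).
    assert (Hh : gg t = h th) by (unfold gg; rewrite Hx; reflexivity).
    pose proof (HZ th Hth) as HZth.
    assert (Hl_eq : l th - gfun w th * Pop ts k gg th = gfun w th * (gg t - Jop k gg t)).
    { rewrite HP, Hh. unfold h, gfun. field. lra. }
    rewrite Hl_eq, Rabs_mult.
    assert (Hkr : 1 <= INR k) by (apply (le_INR 1); auto).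
    pose proof (Jop_err k gg (Lh * ts) t Hk ltac:(nra) Hgl) as Herr.
    assert (Hg0 : 0 < gfun w th) by (unfold gfun; apply Rinv_0_lt_compat; lra).
    assert (Hg1 : gfun w th <= / w 0%nat) by (unfold gfun; apply Rinv_le_contravar; lra).
    rewrite (Rabs_right (gfun w th)) by lra.
    eapply Rle_trans.
    { apply Rmult_le_compat; [lra|apply Rabs_pos|apply Hg1|apply Herr]. }
    replace (/ w 0%nat * (2 * (Lh * ts) / INR k)) with (E / INR k) by (unfold E; field; lra).
    unfold Rdiv. apply Rmult_le_compat_r; [apply Rlt_le, Rinv_0_lt_compat; lra|].
    assert (1 <= 64 * K0 * (1 + G) * (1 + r)).
    { assert (1 <= 64 * K0) by lra. assert (1 <= 64 * K0 * (1 + G)) by nra. nra. }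
    nra.
  - intros x Hx. unfold Rdiv. rewrite Rabs_mult, Rabs_Rinv by (pose proof (Hw x); lra).
    rewrite (Rabs_right (w x)) by (pose proof (Hw x); lra).
    assert (Hinv : / w x <= (1 + r) * maxinv w k).
    { pose proof (maxinv_nonneg w k).
      destruct x as [|x].
      - assert (/ w 0%nat = r * / w 1%nat) by (unfold r; field; lra).
        pose proof (maxinv_ge w k 1 ltac:(lia)). nra.
      - pose proof (maxinv_ge w k (S x) ltac:(lia)). nra. }
    set (Bc := G * (INR k + 1) ^ 6 * K0 ^ k).
    assert (HBc : Bc * (1 + r) <= (64 * K0 * (1 + G) * (1 + r) * (1 + E)) ^ k).
    { rewrite !Rpow_mult_distr. unfold Bc.
      assert (H6 : (INR k + 1) ^ 6 <= 64 ^ k).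
      { replace (64 ^ k) with ((2 ^ k) ^ 6) by (rewrite <- pow_mult, Nat.mul_comm, pow_mult; f_equal; simpl; ring).
        apply pow_incr. pose proof (pos_INR k). pose proof (nat_pow2 k). lra. }
      assert (HG1 : G <= (1 + G) ^ k) by (pose proof (pow_ge_self (1 + G) k ltac:(lra) Hk); lra).
      assert (Hr1 : 1 + r <= (1 + r) ^ k) by (apply pow_ge_self; auto; lra).
      assert (HE1 : 1 <= (1 + E) ^ k) by (apply pow_R1_Rle; lra).
      assert (HK0 : 0 <= K0 ^ k) by (apply pow_le; lra).
      assert (H64 : 0 <= (INR k + 1) ^ 6) by (apply pow_le; pose proof (pos_INR k); lra).
      assert (A : G * (INR k + 1) ^ 6 * K0 ^ k * (1 + r) <= (1 + G) ^ k * 64 ^ k * K0 ^ k * (1 + r) ^ k).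
      { apply Rmult_le_compat; try lra.
        - apply Rmult_le_pos; [apply Rmult_le_pos|]; lra.
        - apply Rmult_le_compat_r; auto. apply Rmult_le_compat; lra. }
      assert (0 <= (1 + G) ^ k * 64 ^ k * K0 ^ k * (1 + r) ^ k).
      { apply Rmult_le_pos; [apply Rmult_le_pos; [apply Rmult_le_pos|]|]; apply pow_le; lra. }
      nra. }
    pose proof (Hc1 x). pose proof (maxinv_nonneg w k).
    assert (0 < / w x) by (apply Rinv_0_lt_compat, Hw).
    assert (Rabs (c x) * / w x <= Bc * ((1 + r) * maxinv w k)) by (apply Rmult_le_compat; [apply Rabs_pos|lra|unfold Bc, K0; lra|lra]).
    nra.
Qed.
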